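(* For every $x\in[0,1/56]$ there exists a sequence $(\tilde d_i(x))_{i\ge1}$ with each $\tilde d_i(x)\in\{0\}\cup\{1/n:n\ge1\}$ such that $$x=\sum_{i=1}^{\infty}\frac{\tilde d_i(x)}{8^i}.$$ *)

(* Defs.v *)
From Stdlib Require Import Reals.
Open Scope R_scope.

Definition admissible_digit (d : R) : Prop :=
  d = 0 \/ exists n : nat, (1 <= n)%nat /\ d = / INR n.

(* Main.v *)
Require Import Defs.
From Stdlib Require Import Reals Lra Lia ZArith ClassicalEpsilon.
Open Scope R_scope.

Lemma step_ex : forall s : R, exists d : R,
  0 <= s <= 1/7 -> admissible_digit d /\ 0 <= s - d <= 1/56.
Proof.
  intros s.
  destruct (Req_dec s 0) as [Hs0|Hs0].
  { exists 0; intros _; split; [left; reflexivity| lra]. }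
  destruct (Rle_dec 0 s) as [Hs|Hs]; [|exists 0; intros; lra].
  assert (Hsp : 0 < s) by lra.
  destruct (archimed (/ s)) as [H1 H2].
  set (z := up (/ s)) in *.
  destruct (Rle_dec s (1/7)) as [Hs7|Hs7]; [|exists 0; intros; lra].
  assert (Hinv : 7 <= / s).
  { apply (Rmult_le_reg_r s); [lra|]. rewrite Rinv_l by lra. lra. }
  assert (Hz : (8 <= z)%Z).
  { assert (7 < IZR z) by lra. apply lt_IZR in H. lia. }
  assert (HN : 8 <= IZR z) by (apply IZR_le; exact Hz).
  exists (/ INR (Z.to_nat z)).
  intros _.
  assert (HI : INR (Z.to_nat z) = IZR z).
  { rewrite INR_IZR_INZ. rewrite Z2Nat.id by lia. reflexivity. }
  split.
  - right. exists (Z.to_nat z). split; [lia|reflexivity].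
  - rewrite HI.
    set (N := IZR z) in *.
    assert (A1 : s * N > 1).
    { replace 1 with (s * / s) by (field; lra). apply Rmult_lt_compat_l; lra. }
    assert (A2 : s * (N - 1) <= 1).
    { assert (s * (N - 1) <= s * / s) by (apply Rmult_le_compat_l; lra).
      rewrite Rinv_r in H by lra. exact H. }
    assert (E : s - / N = (s * N - 1) / N) by (field; lra).
    rewrite E. split.
    + unfold Rdiv; apply Rmult_le_pos; [lra| left; apply Rinv_0_lt_compat; lra].
    + apply (Rmult_le_reg_r N); [lra|].
      unfold Rdiv. rewrite Rmult_assoc, Rinv_l by lra. nra.
Qed.

Definition f (s : R) : R := proj1_sig (constructive_indefinite_description _ (step_ex s)).

Lemma f_spec : forall s, 0 <= s <= 1/7 -> admissible_digit (f s) /\ 0 <= s - f s <= 1/56.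
Proof. intros s. unfold f. destruct (constructive_indefinite_description _ _); simpl; auto. Qed.

Fixpoint t (x : R) (k : nat) : R :=
  match k with O => x | S k => 8 * t x k - f (8 * t x k) end.

Definition dd (x : R) (k : nat) : R :=
  match k with O => 0 | S k => f (8 * t x k) end.

Lemma t_inv : forall x, 0 <= x <= 1/56 -> forall k, 0 <= t x k <= 1/56.
Proof.
  intros x Hx k; induction k; simpl; auto.
  apply f_spec; lra.
Qed.

Lemma partial : forall x n,
  sum_f_R0 (fun k => dd x (S k) / 8 ^ (S k)) n = x - t x (S n) / 8 ^ (S n).
Proof.
  intros x n; induction n.
  - simpl. field.
  - change (sum_f_R0 (fun k => dd x (S k) / 8 ^ (S k)) (S n)) with
      (sum_f_R0 (fun k => dd x (S k) / 8 ^ (S k)) n + dd x (S (S n)) / 8 ^ (S (S n))).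
    rewrite IHn.
    change (t x (S (S n))) with (8 * t x (S n) - f (8 * t x (S n))).
    change (dd x (S (S n))) with (f (8 * t x (S n))).
    assert (0 < 8 ^ (S n)) by (apply pow_lt; lra).
    replace (8 ^ (S (S n))) with (8 * 8 ^ (S n)) by reflexivity.
    field. lra.
Qed.

Theorem lemma2p4 :
  forall x : R, 0 <= x <= 1 / 56 ->
  exists d : nat -> R,
    (forall i : nat, (1 <= i)%nat -> admissible_digit (d i)) /\
    infinite_sum (fun k : nat => d (S k) / 8 ^ (S k)) x.
Proof.
  intros x Hx. exists (dd x). split.
  - intros i Hi. destruct i; [lia|]. simpl.
    apply f_spec. pose proof (t_inv x Hx i). lra.
  - intros eps Heps.
    assert (Ha : Rabs (/8) < 1) by (rewrite Rabs_pos_eq; lra).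
    destruct (pow_lt_1_zero (/8) Ha eps Heps) as [N HN].
    exists N. intros n Hn. unfold R_dist. rewrite partial.
    replace (x - t x (S n) / 8 ^ S n - x) with (- (t x (S n) * (/8) ^ S n)).
    2:{ rewrite pow_inv. field. apply pow_nonzero. lra. }
    rewrite Rabs_Ropp, Rabs_mult.
    pose proof (t_inv x Hx (S n)).
    assert (HN' := HN (S n) ltac:(lia)).
    rewrite (Rabs_pos_eq (t x (S n))) by lra.
    pose proof (Rabs_pos ((/8) ^ S n)).
    nra.
Qed.
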